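(* For every $\alpha>0$ there exists a 1-2-metric such that the greedy-routing network creation game on it with edge price $\alpha$ admits an improving response cycle.
   Context: A 1-2-metric is a finite metric space $(\mathcal{P},d)$ with $d(u,v)\in\{1,2\}$ for all distinct $u,v$. Game: agents are the points of $\mathcal{P}$; agent $u$'s strategy is $S_u\subseteq\mathcal{P}\setminus\{u\}$; a profile $\mathbf{s}$ defines the directed network with arcs $(u,v)$, $v\in S_u$, of length $d(u,v)$. A greedy path from $u$ to $v$ is a directed path $u=x_1,\dots,x_j=v$ of arcs with $d(x_i,v)>d(x_{i+1},v)$ for all $i$. $\mathrm{stretch}(u,v)$ is the minimum length of a greedy path from $u$ to $v$ divided by $d(u,v)$, or a fixed sufficiently large penalty constant $Z$ if none exists. Cost: $c_u(\mathbf{s})=\sum_{v\ne u}\mathrm{stretch}(u,v)+\alpha|S_u|$. An improving response of $u$ to $\mathbf{s}$ is a strategy $S'_u$ with $c_u(S'_u,\mathbf{s}_{-u})<c_u(\mathbf{s})$. An improving response cycle is a sequence of profiles $\mathbf{s}_0,\mathbf{s}_1,\dots,\mathbf{s}_k=\mathbf{s}_0$ ($k\ge1$) where each $\mathbf{s}_i$ arises from $\mathbf{s}_{i-1}$ by a single agent switching to an improving response. *)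

(* Defs.v *)
From mathcomp Require Import all_boot.
From Stdlib Require Import Reals ClassicalDescription.

Set Implicit Arguments.
Unset Strict Implicit.
Unset Printing Implicit Defensive.

Section GreedyRouting.

Variable T : finType.

Definition metric12 (d : T -> T -> nat) : Prop :=
  [/\ forall x, d x x = 0%N,
      forall x y, d x y = d y x,
      forall x y z, (d x z <= d x y + d y z)%N
    & forall x y, x <> y -> d x y = 1%N \/ d x y = 2%N].

Variable d : T -> T -> nat.

(* A strategy profile: agent u buys the arcs to the points of s u. *)
Definition profile := {ffun T -> {set T}}.

Definition valid_strategy (u : T) (S : {set T}) : Prop := u \notin S.
Definition valid_profile (s : profile) : Prop :=
  forall u, valid_strategy u (s u).

Definition greedy_path (s : profile) (u v : T) (p : seq T) : Prop :=
  path (fun x y => (y \in s x) && (d y v < d x v)%N) u p /\ last u p = v.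

Definition path_len (u : T) (p : seq T) : nat := sumn (pairmap d u p).

Definition has_greedy_len (s : profile) (u v : T) (L : nat) : Prop :=
  exists p, greedy_path s u v p /\ path_len u p = L.

Definition greedy_len_pred (s : profile) (u v : T) : pred nat :=
  fun L => if excluded_middle_informative (has_greedy_len s u v L)
           then true else false.

Lemma greedy_len_pred_ex (s : profile) (u v : T) :
  (exists L, has_greedy_len s u v L) -> exists L, greedy_len_pred s u v L.
Proof.
move=> [L HL]; exists L; rewrite /greedy_len_pred.
by case: excluded_middle_informative.
Qed.

Definition stretch (Z : R) (s : profile) (u v : T) : R :=
  match excluded_middle_informative (exists L, has_greedy_len s u v L) with
  | left H => (INR (ex_minn (greedy_len_pred_ex H)) / INR (d u v))%R
  | right _ => Z
  end.

Definition cost (alpha Z : R) (s : profile) (u : T) : R :=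
  (foldr (fun v acc => stretch Z s u v + acc) 0 [seq v <- enum T | v != u]
   + alpha * INR #|s u|)%R.

Definition update (s : profile) (u : T) (S : {set T}) : profile :=
  [ffun x => if x == u then S else s x].

Definition improving_step (alpha Z : R) (s s' : profile) : Prop :=
  exists u S, valid_strategy u S /\ s' = update s u S /\
    (cost alpha Z (update s u S) u < cost alpha Z s u)%R.

(* Improving response cycle s0, s_1, ..., s_k = s0 with k >= 1, where
   ss = [:: s_1; ...; s_k]. *)
Definition improving_response_cycle (alpha Z : R) (s0 : profile)
    (ss : seq profile) : Prop :=
  [/\ valid_profile s0, (0 < size ss)%N,
      last s0 ss = s0
    & forall i, (i < size ss)%N ->
        improving_step alpha Z (nth s0 (s0 :: ss) i) (nth s0 ss i)].

End GreedyRouting.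

(* Main.v *)
Require Import Defs.
From mathcomp Require Import all_boot.
From Stdlib Require Import Reals Lra ClassicalDescription.

Set Implicit Arguments.
Unset Strict Implicit.
Unset Printing Implicit Defensive.

Section Gen.
Variable T : finType.
Variable d : T -> T -> nat.
Hypothesis Hd : metric12 d.

Variable univ : seq T.
Hypothesis Hun : enum T = univ.

Lemma mem_univ x : x \in univ.
Proof. by rewrite -Hun mem_enum. Qed.

Definition gl (adj : T -> T -> bool) (u v : T) : seq nat :=
  ((if adj u v then [:: d u v] else [::]) ++
  [seq (d u x + d x v)%N | x <- [seq x <- univ |
      [&& adj u x, adj x v, (d x v < d u v)%N & (0 < d x v)%N]]])%SEQ.

Lemma d_le2 x y : (d x y <= 2)%N.
Proof.
case: Hd => H0 _ _ H12; case: (eqVneq x y) => [->|/eqP xy]; first by rewrite H0.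
by case: (H12 _ _ xy) => ->.
Qed.

Lemma d0 x y : d x y = 0%N -> x = y.
Proof.
case: Hd => _ _ _ H12 h; case: (eqVneq x y) => [//|/eqP xy].
by case: (H12 _ _ xy); rewrite h.
Qed.

Lemma greedy_char (adj : T -> T -> bool) (s : profile T) (u v : T) (L : nat) (Hadj : forall x y, adj x y = (y \in s x)) : u != v ->
  has_greedy_len d s u v L <-> L \in gl adj u v.
Proof.
move=> uv; rewrite /gl !Hadj; split.
- move=> [p [[Hp Hl] Hlen]].
  case: p Hp Hl Hlen => [|y p] /=.
    by move=> _ Hl; rewrite Hl eqxx in uv.
  move/andP=> [/andP[ysu ylt] Hp].
  case: p Hp => [|z p] /=.
    move=> _ yv; subst y; rewrite /path_len /= addn0 => <-; by rewrite mem_cat ysu mem_seq1 eqxx.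
  move/andP=> [/andP[zsy zlt] Hp].
  have duv := d_le2 u v.
  have dzv : d z v = 0%N by move: ylt zlt duv; case: (d u v) => [|[|[|]]] //;
     case: (d y v) => [|[|]] //; case: (d z v).
  have zv := d0 dzv; subst z.
  case: p Hp => [|w p] /=; last by rewrite dzv ltn0 andbF.
  rewrite /path_len /= addn0 => _ _ <-; rewrite mem_cat; apply/orP; right; apply/mapP; exists y.
    rewrite mem_filter mem_univ !Hadj ysu zsy ylt andbT /=.
    by move: zlt; rewrite dzv.
  by [].
- rewrite mem_cat => /orP [].
    case: ifP => // vsu; rewrite mem_seq1 => /eqP ->.
    exists [:: v]; split; last by rewrite /path_len /= addn0.
    split => //=; rewrite vsu /=.
    case: Hd => H0 _ _ H12; rewrite H0 andbT lt0n; apply/eqP => h.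
    by move: (d0 h) uv => ->; rewrite eqxx.
  move/mapP=> [x]; rewrite mem_filter !Hadj => /andP[/and4P[xsu vsx xlt xpos] _] ->.
  exists [:: x; v]; split; last by rewrite /path_len /= addn0.
  split => //=; rewrite xsu xlt vsx /=.
  by case: Hd => H0 _ _ _; rewrite H0 xpos.
Qed.

Definition lmin (l : seq nat) : nat :=
  match l with [::] => 0%N | x :: t => foldr minn x t end.

Lemma lmin_spec l : l != [::] -> lmin l \in l /\ forall y, y \in l -> (lmin l <= y)%N.
Proof.
case: l => // x t _ /=.
elim: t => [|y t [IH1 IH2]] /=.
  by rewrite mem_seq1 eqxx; split => // z; rewrite mem_seq1 => /eqP ->.
split.
  case: (leqP y (foldr minn x t)) => h.
    by rewrite !inE eqxx orbT.
  move: IH1; rewrite !inE => /orP[->|->] //; by rewrite !orbT.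
move=> z; rewrite !inE => /or3P[/eqP->| /eqP->|zt].
- apply: leq_trans (geq_minr _ _) _; apply: IH2; by rewrite inE eqxx.
- by apply: geq_minl.
- apply: leq_trans (geq_minr _ _) _; apply: IH2; by rewrite inE zt orbT.
Qed.

Definition ur (adj : T -> T -> bool) (u v : T) : nat := if gl adj u v == [::] then 1%N else 0%N.
Definition hs (adj : T -> T -> bool) (u v : T) : nat :=
  if gl adj u v == [::] then 0%N else
  if d u v == 1%N then (2 * lmin (gl adj u v))%N else lmin (gl adj u v).

Lemma stretchE (adj : T -> T -> bool) Z (s : profile T) (u v : T) (Hadj : forall x y, adj x y = (y \in s x)) : u != v ->
  stretch d Z s u v = (INR (ur adj u v) * Z + INR (hs adj u v) / 2)%R.
Proof.
move=> uv; rewrite /stretch /ur /hs.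
case: excluded_middle_informative => [H|H].
- have ne : gl adj u v != [::].
    case: H => L HL; move/(greedy_char _ Hadj uv): HL.
    by case: (gl adj u v).
  rewrite (negbTE ne).
  have [m1 m2] := lmin_spec ne.
  have -> : ex_minn (greedy_len_pred_ex H) = lmin (gl adj u v).
    case: ex_minnP => m Pm Hmin.
    have Pm' : m \in gl adj u v.
      apply/(greedy_char _ Hadj uv); move: Pm; rewrite /greedy_len_pred.
      by case: excluded_middle_informative.
    apply/eqP; rewrite eqn_leq m2 // andbT; apply: Hmin.
    rewrite /greedy_len_pred; case: excluded_middle_informative => //.
    by move=> []; apply/(greedy_char _ Hadj uv).
  have := d_le2 u v.
  have : d u v <> 0%N by move/d0=> h; rewrite h eqxx in uv.
  case: (d u v) => [|[|[|]]] //= _ _.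
    rewrite mult_INR /=; field.
  simpl; lra.
- have e : gl adj u v = [::].
    case E: (gl adj u v) => [//|L l]; exfalso; apply: H; exists L.
    by apply/(greedy_char _ Hadj uv); rewrite E inE eqxx.
  rewrite e /=; lra.
Qed.

Definition cdata (adj : T -> T -> bool) (u : T) : nat * nat * nat :=
  (sumn [seq ur adj u v | v <- [seq v <- univ | v != u]],
   sumn [seq hs adj u v | v <- [seq v <- univ | v != u]], count (adj u) univ).

Lemma costE (adj : T -> T -> bool) alpha Z (s : profile T) (u : T) (Hadj : forall x y, adj x y = (y \in s x)) :
  cost d alpha Z s u = (INR (cdata adj u).1.1 * Z + INR (cdata adj u).1.2 / 2
     + alpha * INR (cdata adj u).2)%R.
Proof.
rewrite /cost /cdata /=; congr (_ + _)%R; last first.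
  congr (_ * INR _)%R; rewrite cardE /enum_mem -enumT Hun size_filter.
  by apply: eq_count => x; rewrite Hadj.
rewrite Hun.
have : all (fun v => v != u) [seq v <- univ | v != u] by apply: filter_all.
elim: [seq v <- univ | v != u] => [|v l IH] /=.
  by move=> _; rewrite /=; lra.
move/andP=> [vu al]; rewrite IH // (stretchE _ Hadj) 1?eq_sym // !plus_INR; lra.
Qed.

End Gen.
Unset Implicit Arguments.

Definition edges : seq (nat * nat) :=
  [:: (0,1); (1,0); (0,2); (2,0); (1,3); (3,1); (2,3); (3,2)]%N.
Definition dd (i j : 'I_4) : nat :=
  if i == j then 0%N else if (nat_of_ord i, nat_of_ord j) \in edges then 1%N else 2%N.

Definition o0 := @Ordinal 4 0 erefl.
Definition o1 := @Ordinal 4 1 erefl.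
Definition o2 := @Ordinal 4 2 erefl.
Definition o3 := @Ordinal 4 3 erefl.
Definition L4 := [:: o0; o1; o2; o3].

Lemma enum4 : enum 'I_4 = L4.
Proof. by apply: (inj_map val_inj); rewrite val_enum_ord. Qed.

Lemma all4 (P : pred 'I_4) : all P L4 -> forall x, P x.
Proof. by move/allP=> H x; apply: H; rewrite -enum4 mem_enum. Qed.

Lemma dd_metric : metric12 dd.
Proof.
have h1 : all (fun x => dd x x == 0%N) L4 by vm_compute.
have h2 : all (fun x => all (fun y => dd x y == dd y x) L4) L4 by vm_compute.
have h3 : all (fun x => all (fun y => all (fun z => (dd x z <= dd x y + dd y z)%N) L4) L4) L4
  by vm_compute.
have h4 : all (fun x : 'I_4 => all (fun y : 'I_4 => (x != y) ==> (dd x y == 1%N) || (dd x y == 2%N)) L4) L4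
  by vm_compute.
split.
- by move=> x; apply/eqP; move: x; apply: all4.
- by move=> x y; apply/eqP; move: y; apply: all4; move: x; apply: all4.
- by move=> x y z; move: z; apply: all4; move: y; apply: all4; move: x; apply: all4.
- move=> x y /eqP xy; move: (all4 _ (all4 _ h4 x) y).
  by rewrite xy /= => /orP[] /eqP; [left|right].
Qed.

Definition mkP (l : seq (seq nat)) : profile 'I_4 :=
  [ffun i : 'I_4 => [set j : 'I_4 | nat_of_ord j \in nth [::] l i]].
Definition adjl (l : seq (seq nat)) (x y : 'I_4) : bool := nat_of_ord y \in nth [::] l x.

Lemma adjlE l x y : adjl l x y = (y \in mkP l x).
Proof. by rewrite /adjl ffunE inE. Qed.

Definition better (l l' : seq (seq nat)) (u : 'I_4) : bool :=
  let a := cdata dd L4 (adjl l') u in let b := cdata dd L4 (adjl l) u in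
  [&& ((a.1.1 < b.1.1)%N || [&& a.1.1 == b.1.1, (a.1.2 <= b.1.2)%N, (a.2 <= b.2)%N
        & (a.1.2 < b.1.2)%N || (a.2 < b.2)%N]),
   (a.1.2 <= 9)%N, (a.2 <= 3)%N, ~~ adjl l' u u &
   all (fun x => (x == u) || (nth [::] l x == nth [::] l' x)) L4].

Lemma step alpha Z l l' (u : 'I_4) :
  (0 < alpha)%R -> (3 * alpha + 10 <= Z)%R -> better l l' u ->
  improving_step dd alpha Z (mkP l) (mkP l').
Proof.
move=> ha hZ /and5P[H Ha2 Ha3 hu hall].
exists u, (mkP l' u); split; first by rewrite /valid_strategy -adjlE.
have hs' : mkP l' = update (mkP l) u (mkP l' u).
  apply/ffunP=> x; rewrite !ffunE; case: eqP => [->//|/eqP xu].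
  move: (all4 _ hall x); rewrite (negbTE xu) /= => /eqP e.
  by apply/setP => y; rewrite !inE e.
split => //; rewrite -hs' !(costE dd_metric enum4 _ _ _ (adjlE _)).
move: H Ha2 Ha3.
case: (cdata dd L4 (adjl l') u) => [[a1 a2] a3]; case: (cdata dd L4 (adjl l) u) => [[b1 b2] b3] /=.
move=> H Ha2 Ha3.
have Z0 : (0 <= Z)%R by lra.
have i2 := le_INR _ _ (leP Ha2); have i3 := le_INR _ _ (leP Ha3); rewrite /= in i2 i3.
have p2 := pos_INR b2; have p3 := pos_INR b3; have p1 := pos_INR a1.
have q2 := pos_INR a2; have q3 := pos_INR a3.
case/orP: H => [/leP h|/and4P[/eqP e /leP h2 /leP h3 /orP h4]].
- have h' := le_INR _ _ h; rewrite S_INR in h'.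
  have hm := Rmult_le_compat_r _ _ _ Z0 h'.
  have hm2 := Rmult_le_compat_r _ _ _ (Rlt_le _ _ ha) i3.
  have hm3 := Rmult_le_pos _ _ (Rlt_le _ _ ha) p3.
  rewrite (Rmult_comm alpha (INR a3)) (Rmult_comm alpha (INR b3)).
  rewrite Rmult_plus_distr_r Rmult_1_l in hm.
  rewrite Rmult_comm in hm3.
  lra.
- subst b1; have := le_INR _ _ h2; have := le_INR _ _ h3.
  have hm2 := Rmult_le_compat_r _ _ _ (Rlt_le _ _ ha) (le_INR _ _ h3).
  case: h4 => /leP h; have := lt_INR _ _ h.
    rewrite (Rmult_comm alpha (INR a3)) (Rmult_comm alpha (INR b3)); lra.
  move=> hl; have hm4 := Rmult_lt_compat_r _ _ _ ha hl.
  rewrite (Rmult_comm alpha (INR a3)) (Rmult_comm alpha (INR b3)); lra.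
Qed.

Definition l1 := [:: [:: 1]; [:: 3]; [:: 1; 3]; [:: 0; 1]]%N.
Definition l2 := [:: [:: 1]; [:: 0; 2]; [:: 1; 3]; [:: 0; 1]]%N.
Definition l3 := [:: [:: 1]; [:: 0; 2]; [:: 0]; [:: 0; 1]]%N.
Definition l4 := [:: [:: 2; 3]; [:: 0; 2]; [:: 0]; [:: 0; 1]]%N.
Definition l5 := [:: [:: 2; 3]; [:: 0; 2]; [:: 0]; [:: 2]]%N.
Definition l6 := [:: [:: 2; 3]; [:: 3]; [:: 0]; [:: 2]]%N.
Definition l7 := [:: [:: 2; 3]; [:: 3]; [:: 1; 3]; [:: 2]]%N.
Definition l8 := [:: [:: 1]; [:: 3]; [:: 1; 3]; [:: 2]]%N.

Theorem theorem2p9 :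
  forall alpha : R, (0 < alpha)%R ->
  exists (T : finType) (d : T -> T -> nat),
    metric12 d /\
    exists (s0 : profile T) (ss : seq (profile T)) (Z0 : R),
      forall Z : R, (Z0 <= Z)%R ->
        improving_response_cycle d alpha Z s0 ss.
Proof.
move=> alpha ha; exists 'I_4, dd; split; first exact: dd_metric.
exists (mkP l1), [:: mkP l2; mkP l3; mkP l4; mkP l5; mkP l6; mkP l7; mkP l8; mkP l1],
  (3 * alpha + 10)%R => Z hZ.
split => //.
- move=> u; rewrite /valid_strategy -adjlE; move: u; apply: all4; by vm_compute.
- case=> [|[|[|[|[|[|[|[|//]]]]]]]] _ /=.
  + by apply: (step _ _ _ _ o1 ha hZ); vm_compute.
  + by apply: (step _ _ _ _ o2 ha hZ); vm_compute.
  + by apply: (step _ _ _ _ o0 ha hZ); vm_compute.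
  + by apply: (step _ _ _ _ o3 ha hZ); vm_compute.
  + by apply: (step _ _ _ _ o1 ha hZ); vm_compute.
  + by apply: (step _ _ _ _ o2 ha hZ); vm_compute.
  + by apply: (step _ _ _ _ o0 ha hZ); vm_compute.
  + by apply: (step _ _ _ _ o3 ha hZ); vm_compute.
Qed.
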